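(* In the lower-bound instance for CTS-G described in the context, for any round $t>T/2$ such that $K_{t-1}\le0.5\,m(t-H)$, we have $|\bar G_t|\ge\frac m2$, where $\bar G_t:=\{a\in G: n_{a,t}\ge H\}$.
   Context: Top-$m$ instance: $N$ base arms with $N\ge400m$, $m\ge1$; every round any $m$ of the $N$ arms may be played. A set $G\subset[N]$ with $|G|=m$ is fixed; rewards are deterministic: $r_a=\Delta$ for $a\in G$ and $r_a=0$ otherwise, with $\Delta:=\frac45\sqrt{\frac{N\ln T}{T}}$ and $T>\frac{16}{25}N\ln T$. The agent runs CTS-G with $\gamma=1$: in round $t$ draw independently $w_{a,t}\sim\mathcal{N}\big(\hat r_{a,n_{a,t}},\frac{m\ln t}{n_{a,t}+1}\big)$ and play the $m$ arms with largest $w_{a,t}$; $n_{a,t}$ is the number of plays of $a$ in rounds $1,\dots,t-1$, $\hat r_{a,n_{a,t}}$ its empirical mean ($0$ if unplayed). $k_s$ is the number of arms of $[N]\setminus G$ played in round $s$, $K_{t-1}:=\sum_{s=1}^{t-1}k_s$, and $H:=\lceil64m\ln T/\Delta^2\rceil$. *)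

(* Defs.v *)
From HB Require Import structures.
From mathcomp Require Import all_boot all_order all_algebra.
From mathcomp Require Import reals exp.
Import Order.TTheory GRing.Theory Num.Theory.
Local Open Scope ring_scope.

(* Arms are 'I_N; rounds are t = 1, 2, ..., T.
   S t : the set of arms played in round t.
   z t a : the realization of the standard normal variable used to draw
           w_{a,t} ~ N(hat r, m ln t / (n+1)) as  hat r + sqrt(var) * z t a. *)

Definition Delta (R : realType) (N T : nat) : R :=
  4 / 5 * Num.sqrt (N%:R * ln T%:R / T%:R).

Definition Hpar (R : realType) (m N T : nat) : int :=
  Num.ceil (64 * m%:R * ln (T%:R : R) / (Delta R N T) ^+ 2).

Definition reward (R : realType) (N T : nat) (G : {set 'I_N}) (a : 'I_N) : R :=
  if a \in G then Delta R N T else 0.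

Definition nplays (N : nat) (S : nat -> {set 'I_N}) (a : 'I_N) (t : nat) : nat :=
  (\sum_(1 <= s < t) (a \in S s))%N.

Definition emp_mean (R : realType) (N T : nat) (G : {set 'I_N})
    (S : nat -> {set 'I_N}) (a : 'I_N) (t : nat) : R :=
  if nplays N S a t == 0%N then 0
  else (\sum_(1 <= s < t | a \in S s) reward R N T G a) / (nplays N S a t)%:R.

Definition wsample (R : realType) (m N T : nat) (G : {set 'I_N})
    (S : nat -> {set 'I_N}) (z : nat -> 'I_N -> R) (a : 'I_N) (t : nat) : R :=
  emp_mean R N T G S a t
  + Num.sqrt (m%:R * ln (t%:R : R) / (nplays N S a t).+1%:R) * z t a.

Definition ctsg_run (R : realType) (m N T : nat) (G : {set 'I_N})
    (S : nat -> {set 'I_N}) (z : nat -> 'I_N -> R) : Prop :=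
  forall t : nat, (1 <= t <= T)%N ->
    #|S t| = m /\
    (forall a b : 'I_N, a \in S t -> b \notin S t ->
       wsample R m N T G S z b t <= wsample R m N T G S z a t).

(* K_{t-1} = sum_{s=1}^{t-1} k_s, k_s = number of non-G arms played in round s *)
Definition Kcum (N : nat) (G : {set 'I_N}) (S : nat -> {set 'I_N}) (t : nat) : nat :=
  (\sum_(1 <= s < t) #|S s :\: G|)%N.

Definition Gbar (R : realType) (m N T : nat) (G : {set 'I_N})
    (S : nat -> {set 'I_N}) (t : nat) : {set 'I_N} :=
  [set a in G | (Hpar R m N T <= (nplays N S a t)%:Z)%R].

(* Main.v *)
Require Import Defs.
From HB Require Import structures.
From mathcomp Require Import all_boot all_order all_algebra.
From mathcomp Require Import reals exp.
From mathcomp Require Import ring lra zify.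
Import Order.TTheory GRing.Theory Num.Theory.
Local Open Scope ring_scope.

Lemma H_lt_t (R : realType) (N m T t : nat) :
  (1 <= m)%N -> (400 * m <= N)%N -> (1 <= t <= T)%N ->
  (T%:R : R) / 2 < t%:R -> (Hpar R m N T)%:~R < (t%:R : R).
Proof.
move=> m1 mN /andP[t1 tT] Tt.
have T1 : (1 <= T)%N by apply: leq_trans tT.
have T1R : (1 : R) <= T%:R by rewrite ler1n.
have t1R : (1 : R) <= t%:R by rewrite ler1n.
have L0 : 0 <= ln (T%:R : R) by apply: ln_ge0.
have N0 : (400 * m%:R : R) <= N%:R by rewrite -(natrM R 400 m) ler_nat.
have m1R : (1 : R) <= m%:R by rewrite ler1n.
rewrite /Hpar.
have [L00|Lp] := eqVneq (ln (T%:R : R)) 0.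
  by rewrite L00 mulr0 mul0r ceil0 /=; lra.
have Lp' : 0 < ln (T%:R : R) by rewrite lt_def Lp L0.
set L := ln (T%:R : R) in L0 Lp Lp' *.
have D2 : Delta R N T ^+ 2 = 16 / 25 * (N%:R * L / T%:R).
  rewrite /Delta exprMn sqr_sqrtr; last first.
    by apply: divr_ge0 => //; apply: mulr_ge0.
  by rewrite -/L; congr (_ * _); rewrite expr2; lra.
have Tp : (0 : R) < T%:R by lra.
have Np : (0 : R) < N%:R by lra.
have xle : 64 * m%:R * L / Delta R N T ^+ 2 <= T%:R / 4.
  rewrite D2 ler_pdivrMr; last first.
    by apply: mulr_gt0 => //; apply: divr_gt0 => //; apply: mulr_gt0.
  have -> : T%:R / 4 * (16 / 25 * (N%:R * L / T%:R)) = 4 / 25 * N%:R * L.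
    by field; lra.
  nra.
have := ceilB1_lt (64 * m%:R * L / Delta R N T ^+ 2).
rewrite intrB /=.
have [t1'|t2] := leqP t 1.
  have tE : t = 1%N by lia.
  move: Tt; rewrite tE => Tt.
  have T2 : (T < 2)%N by rewrite -(ltr_nat R); lra.
  have TE : T = 1%N by lia.
  by move: Lp; rewrite /L TE ln1 eqxx.
have t2R : (2 : R) <= t%:R by move: t2; rewrite -(ler_nat R).
lra.
Qed.

Lemma card_setI_sum (N : nat) (A G : {set 'I_N}) :
  #|A :&: G| = (\sum_(a in G) (a \in A))%N.
Proof.
rewrite -sum1_card big_mkcond [RHS]big_mkcond /=; apply: eq_bigr => a _.
by rewrite in_setI; case: (a \in A); case: (a \in G).
Qed.

Theorem lemma7 (R : realType) (N m T : nat) (G : {set 'I_N})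
    (S : nat -> {set 'I_N}) (z : nat -> 'I_N -> R) (t : nat) :
  (1 <= m)%N ->
  (400 * m <= N)%N ->
  #|G| = m ->
  16 / 25 * (N%:R : R) * ln (T%:R : R) < T%:R ->
  ctsg_run R m N T G S z ->
  (1 <= t <= T)%N ->
  (T%:R : R) / 2 < t%:R ->
  ((Kcum N G S t)%:R : R) <= 1 / 2 * m%:R * (t%:R - (Hpar R m N T)%:~R) ->
  (m%:R : R) / 2 <= #|Gbar R m N T G S t|%:R.
Proof.
move=> m1 mN cG _ run tr Tt HK.
have Ht := @H_lt_t R N m T t m1 mN tr Tt.
move: tr => /andP[t1 tT].
move: HK Ht; set H := Hpar R m N T => HK Ht.
set n := fun a => nplays N S a t.
have E1 : (\sum_(a in G) n a + Kcum N G S t = (t-1) * m)%N.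
  rewrite -sum_nat_const_nat /Kcum /n /nplays.
  rewrite [X in (X + _)%N]exchange_big /= -big_split /=.
  apply: eq_big_nat => s /andP[s1 st].
  rewrite -card_setI_sum cardsID.
  have /run [] : (1 <= s <= T)%N by rewrite s1 /=; apply: leq_trans tT; apply: ltnW.
  done.
have nle : forall a, (n a <= t - 1)%N.
  move=> a; rewrite /n /nplays.
  apply: leq_trans (_ : (\sum_(1 <= s < t) 1 <= _)%N).
    by apply: leq_sum => s _; case: (a \in S s).
  by rewrite sum_nat_const_nat muln1.
have sub : Gbar R m N T G S t \subset G.
  by apply/subsetP => a; rewrite inE => /andP[].
set g := Gbar R m N T G S t in sub *.
have cGg : (#|G :\: g|%:R : R) = m%:R - #|g|%:R.
  have := cardsID g G; rewrite (setIidPr sub) cG => <-.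
  by rewrite natrD addrC addKr.
have E2 : (\sum_(a in G) (n a)%:R : R) + (Kcum N G S t)%:R = (t%:R - 1) * m%:R.
  by rewrite -natr_sum -natrD E1 natrM natrB.
have B1 : (\sum_(a in g) (n a)%:R : R) <= (t%:R - 1) *+ #|g|.
  rewrite -sumr_const; apply: ler_sum => a _.
  by rewrite -(natrB _ t1) ler_nat.
have B2 : (\sum_(a in G :\: g) (n a)%:R : R) <= (H%:~R - 1) *+ #|G :\: g|.
  rewrite -sumr_const; apply: ler_sum => a.
  rewrite !inE => /andP[]; rewrite negb_and => /orP[/negP nG aG|]; first by case: nG.
  rewrite -ltNge -/H => Hn _.
  have : ((n a)%:Z + 1 <= H)%R by rewrite lezD1.
  rewrite -(ler_int R) intrD /= => h.
  by rewrite lerBrDr.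
move: E2; rewrite (big_setID g) /= (setIidPr sub) => E2.
rewrite -[(t%:R - 1) *+ _]mulr_natr in B1.
rewrite -[(H%:~R - 1) *+ _]mulr_natr cGg in B2.
move: E2 B1 B2 HK Ht.
set x := (\sum_(a in g) _). set y := (\sum_(a in G :\: g) _).
set K := (Kcum N G S t)%:R. set h := H%:~R. set gg := #|g|%:R.
move=> E2 B1 B2 HK Ht.
have key' : m%:R / 2 * (t%:R - h) - gg * (t%:R - h) = ((t%:R-1) * m%:R - (x+y+K)) + (x - (t%:R-1)*gg) + (y - (h-1)*(m%:R-gg)) + (K - 1/2 * m%:R*(t%:R-h)) by field.
have key : m%:R / 2 * (t%:R - h) <= gg * (t%:R - h).
  rewrite -subr_le0 key'.
  have e0 : (t%:R-1) * m%:R - (x+y+K) <= 0 by rewrite subr_le0 -E2.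
  have h1 : x - (t%:R-1)*gg <= 0 by rewrite subr_le0.
  have h2 : y - (h-1)*(m%:R-gg) <= 0 by rewrite subr_le0.
  have h3 : K - 1/2 * m%:R*(t%:R-h) <= 0 by rewrite subr_le0.
  have := lerD (lerD (lerD e0 h1) h2) h3; rewrite !addr0; exact.
by rewrite ler_pM2r ?subr_gt0 in key.
Qed.
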